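(* Let $n$ be a positive integer. Then $\mathsf{D}_{\mathrm{cc}}^\rightarrow(\mathsf{OMB}_n \circ \mathsf{AND}) = \lceil\log(n + 1)\rceil$.
   Context: $\mathsf{OMB}_n:\{0,1\}^n\to\{0,1\}$ is defined by $\mathsf{OMB}_n(x)=1$ if $\max\{i\in[n]:x_i=0\}$ is odd and $0$ otherwise, with $\mathsf{OMB}_n(1^n)=0$. $f\circ\mathsf{AND}$ is the two-party function $(x,y)\mapsto f(x_1\wedge y_1,\dots,x_n\wedge y_n)$ (Alice holds $x$, Bob $y$), and $\mathsf{D}_{\mathrm{cc}}^\rightarrow$ is deterministic one-way communication complexity. Logarithms are base 2. *)

(* Defs.v *)
From mathcomp Require Import all_boot.
Set Implicit Arguments. Unset Strict Implicit. Unset Printing Implicit Defensive.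

(* n-bit strings; bit i (0-based) of x is x i, it corresponds to coordinate x_(i+1) *)
Notation bits n := {ffun 'I_n -> bool}.

Definition OMB (n : nat) (x : bits n) : bool :=
  [exists i : 'I_n,
     [&& x i == false, [forall j : 'I_n, (i < j) ==> x j] & odd i.+1]].

Definition AND_comp (n : nat) (f : bits n -> bool) (x y : bits n) : bool :=
  f [ffun i => x i && y i].

(* A deterministic one-way protocol of cost c for F : Alice (holding x) sends a
   c-bit message a(x), Bob (holding y) outputs b(a(x), y), which must equal F x y. *)
Definition oneway_protocol (n : nat) (F : bits n -> bits n -> bool) (c : nat) : bool :=
  [exists a : {ffun bits n -> bits c},
    exists b : {ffun (bits c * bits n)%type -> bool},
      [forall x : bits n, forall y : bits n, b (a x, y) == F x y]].

Lemma oneway_protocol_exists (n : nat) (F : bits n -> bits n -> bool) :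
  exists c, oneway_protocol F c.
Proof.
exists n; apply/existsP; exists [ffun x => x].
apply/existsP; exists [ffun p => F p.1 p.2].
by apply/forallP => x; apply/forallP => y; rewrite !ffunE.
Qed.

Definition Dcc_oneway (n : nat) (F : bits n -> bits n -> bool) : nat :=
  ex_minn (oneway_protocol_exists F).

(* Main.v *)
Require Import Defs.
From mathcomp Require Import all_boot.
From mathcomp Require Import zify.

Section S.
Variable n : nat.

Lemma OMB_last (x : bits n) (m : nat) :
  m <= n -> (forall j : 'I_n, m <= j -> x j) ->
  (forall j : 'I_n, j.+1 = m -> x j = false) -> OMB x = odd m.
Proof.
move=> mn hge hm; rewrite /OMB.
case: (posnP m) => [m0|m0].
  rewrite m0; apply/existsP => -[i /and3P[/eqP xi _ _]].
  by rewrite hge ?m0 in xi.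
have mlt : m.-1 < n by rewrite prednK.
have e1 : (Ordinal mlt).+1 = m by rewrite /= prednK.
apply/existsP; case: (boolP (odd m)) => om.
  exists (Ordinal mlt); rewrite e1 om andbT hm //; apply/andP; split=>//.
  apply/forallP => j; apply/implyP => ij; apply: hge.
  by move: ij; rewrite /= -e1.
case => i /and3P[/eqP xi /forallP hf oi].
have im : i < m.
  by rewrite ltnNge; apply/negP => H; rewrite hge in xi.
have : i.+1 = m.
  apply/eqP; rewrite eqn_leq im /=; rewrite leqNgt; apply/negP => H.
  have : i < Ordinal mlt by rewrite /= -ltnS prednK.
  by move=> H2; move: (hf (Ordinal mlt)); rewrite H2 hm.
by move=> e; rewrite e (negbTE om) in oi.
Qed.

Definition lastz (x : bits n) : nat := \max_(i : 'I_n | ~~ x i) i.+1.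

Lemma lastz_le x : lastz x <= n.
Proof. by apply/bigmax_leqP => i _; exact: ltn_ord. Qed.

Lemma lastz_ge x (j : 'I_n) : lastz x <= j -> x j.
Proof.
move=> H; apply/negPn/negP => xj.
have := @leq_bigmax_cond _ (fun i => ~~ x i) (fun i : 'I_n => i.+1) j xj.
rewrite -/(lastz x) => H2; have := leq_trans H2 H; by rewrite ltnn.
Qed.

Lemma lastz_at x (j : 'I_n) : j.+1 = lastz x -> x j = false.
Proof.
rewrite /lastz; case: (pickP (fun i : 'I_n => ~~ x i)) => [i0 xi0|h].
  rewrite (@bigmax_eq_arg _ i0 (fun i => ~~ x i) (fun i : 'I_n => i.+1) xi0).
  case: arg_maxnP => //= k xk _ e.
  have ej : j = k by apply: val_inj; case: e.
  by rewrite ej; apply/negbTE.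
rewrite big_pred0 //.
Qed.

Lemma OMB_lastz x : OMB x = odd (lastz x).
Proof. apply: OMB_last; [exact: lastz_le | exact: lastz_ge | exact: lastz_at]. Qed.

Lemma OMB_and (x y : bits n) :
  OMB [ffun i => x i && y i] = odd (maxn (lastz x) (lastz y)).
Proof.
apply: OMB_last.
- by rewrite geq_max !lastz_le.
- move=> j; rewrite geq_max => /andP[h1 h2]; rewrite ffunE.
  by rewrite (lastz_ge _ _ h1) (lastz_ge _ _ h2).
- move=> j; rewrite ffunE /maxn; case: ifP => _ e.
  + by rewrite (lastz_at _ _ e) andbF.
  + by rewrite (lastz_at _ _ e).
Qed.

Definition xk (k : nat) : bits n := [ffun i : 'I_n => i.+1 != k].

Lemma lastz_xk k : k <= n -> lastz (xk k) = k.
Proof.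
move=> kn; apply/eqP; rewrite eqn_leq; apply/andP; split.
  apply/bigmax_leqP => i; rewrite ffunE negbK => /eqP -> //.
case: k kn => [|k] kn //.
have kl : k < n by [].
apply: (leq_trans _ (@leq_bigmax_cond _ _ (fun i : 'I_n => i.+1) (Ordinal kl) (_ : ~~ xk k.+1 (Ordinal kl)))) => //.
by rewrite ffunE negbK.
Qed.

Definition yl (l : nat) : bits n := [ffun j : 'I_n => l.-1 <= j].

Lemma lastz_yl l : l <= n -> lastz (yl l) = l.-1.
Proof.
move=> ln; apply/eqP; rewrite eqn_leq; apply/andP; split.
  apply/bigmax_leqP => i; rewrite ffunE -ltnNge //.
case: l ln => [|[|l]] // ln.
have kl : l < n by apply: leq_trans ln.
apply: (leq_trans _ (@leq_bigmax_cond _ _ (fun i : 'I_n => i.+1) (Ordinal kl) (_ : ~~ yl l.+2 (Ordinal kl)))) => //.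
by rewrite ffunE /= ltnn.
Qed.
End S.
Arguments lastz {n} x.

Lemma card_bits c : #|{: bits c}| = 2 ^ c.
Proof. by rewrite card_ffun card_bool card_ord. Qed.

Lemma upper n : oneway_protocol (AND_comp (@OMB n)) (up_log 2 n.+1).
Proof.
set c := up_log 2 n.+1.
have H : n.+1 <= #|{: bits c}| by rewrite card_bits; exact: up_logP.
apply/existsP.
exists [ffun x : bits n => enum_val (widen_ord H (inord (lastz x)))].
apply/existsP.
exists [ffun p : (bits c * bits n)%type => odd (maxn (enum_rank p.1 : nat) (lastz p.2))].
apply/forallP => x; apply/forallP => y; rewrite !ffunE /= /AND_comp OMB_and.
by rewrite enum_valK /= inordK // ltnS lastz_le.
Qed.

Lemma lower n c : oneway_protocol (AND_comp (@OMB n)) c -> up_log 2 n.+1 <= c.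
Proof.
case/existsP => a /existsP [b /forallP hb].
apply: up_log_min => //.
rewrite -card_bits -[n.+1]card_ord.
pose f (k : 'I_n.+1) := a (xk n k).
suff : injective f by move/leq_card.
have key : forall k l : 'I_n.+1, k < l -> f k != f l.
  move=> k l kl; apply/negP => /eqP e.
  have h1 := eqP (forallP (hb (xk n k)) (yl n l)).
  have h2 := eqP (forallP (hb (xk n l)) (yl n l)).
  rewrite /f in e; rewrite e h2 /AND_comp !OMB_and !lastz_xk ?lastz_yl in h1;
    try by rewrite -ltnS.
  move: h1; have l0 : 0 < l by apply: leq_ltn_trans kl.
  rewrite /maxn; case: ifP => ?; case: ifP => ?; try lia.
move=> k l e; apply/eqP; case: (ltngtP k l) => // kl.
  by move: (key _ _ kl); rewrite e eqxx.
by move: (key _ _ kl); rewrite e eqxx.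
by apply/eqP; apply: val_inj. Qed.

Theorem claim4p7 (n : nat) (hn : 0 < n) :
  Dcc_oneway (AND_comp (@OMB n)) = up_log 2 n.+1.
Proof.
rewrite /Dcc_oneway; case: ex_minnP => c Hc Hmin.
apply/eqP; rewrite eqn_leq (lower _ _ Hc) andbT.
exact: Hmin (upper n).
Qed.
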